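(* Consider a quantum data-syndrome code of pure distance $d_p$ on $n$ qubits and $m$ measurement bits, subject to noise described by the channel supports $\Gamma=\{\gamma\subseteq[2n+m]: \mathrm{wt}_P(\gamma)\le t\}$ with channel distributions satisfying $P_\gamma(0)>\tfrac12$ for all $\gamma\in\Gamma$. If $t\le\lfloor\frac{d_p-1}{2}\rfloor$, then the total error distribution $P$ is identifiable from the syndrome statistics, i.e. any other family $(P'_\gamma)_{\gamma\in\Gamma}$ of channel distributions for the same $\Gamma$ with $P'_\gamma(0)>\tfrac12$ whose total error distribution $P'$ induces the same syndrome distribution satisfies $P'=P$.
   Context: Phase space representation: a Pauli operator on $n$ qubits (modulo phases) $X^{x_1}Z^{z_1}\otimes\cdots\otimes X^{x_n}Z^{z_n}$ is identified with $(x_1,\dots,x_n,z_1,\dots,z_n)\in\mathbb F_2^{2n}$. For $v=(x,z)\in\mathbb F_2^{2n}$ write $\overline v=(z,x)$. A quantum data-syndrome code is given by pairwise commuting stabilizer generators $g^{(1)},\dots,g^{(l)}\in\mathbb F_2^{2n}$ (i.e. $\overline{g^{(i)}}\cdot g^{(j)}=0$; the generated stabilizer group does not contain $-I$) and a classical code with generator matrix $G_C=[I_l\ A]\in\mathbb F_2^{l\times m}$; for $i\in[m]$ let $f^{(i)}=\sum_{j=1}^l (G_C)_{j,i}g^{(j)}$. Set $N=2n+m$. Errors are $e=(e_d,e_m)\in\mathbb F_2^{2n}\times\mathbb F_2^m=\mathbb F_2^N$, with syndrome $\mathrm{syn}(e)\in\mathbb F_2^m$, $\mathrm{syn}(e)_i=f^{(i)}\cdot\overline{e_d}+(e_m)_i$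 (mod 2). Vectors in $\mathbb F_2^N$ are identified with their supports in $[N]$. The Pauli weight of $e=(x,z,e_m)$ is $\mathrm{wt}_P(e)=|\{i\in[n]: x_i\ne0 \text{ or } z_i\neq 0\}|+|\{j: (e_m)_j\neq 0\}|$. The pure distance is $d_p=\min\{\mathrm{wt}_P(e): e\in\mathbb F_2^N\setminus\{0\},\ \mathrm{syn}(e)=0\}$. A noise model consists of $\Gamma\subseteq 2^{[N]}$ and for each $\gamma\in\Gamma$ a probability distribution $P_\gamma$ on $\mathbb F_2^N$ supported on vectors with support in $\gamma$; the total error distribution $P$ is the distribution of $\sum_\gamma e_\gamma$ with independent $e_\gamma\sim P_\gamma$. The syndrome statistics is the distribution of $\mathrm{syn}(e)$, $e\sim P$. *)

(* Defs.v *)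
From HB Require Import structures.
From mathcomp Require Import all_boot all_order all_algebra.
From mathcomp Require Import reals.
Set Implicit Arguments. Unset Strict Implicit. Unset Printing Implicit Defensive.
Import Order.TTheory GRing.Theory Num.Theory.
Local Open Scope ring_scope.

(* Binary vectors; phase space F_2^{2n} = 'rV['F_2]_(n + n), (x | z). *)
Notation bvec k := 'rV['F_2]_k.

Definition pbar (n : nat) (v : bvec (n + n)) : bvec (n + n) :=
  row_mx (rsubmx v) (lsubmx v).

Definition bdot (k : nat) (u v : bvec k) : 'F_2 := (u *m v^T) 0 0.

(* Classical generator matrix G_C = [I_l A], with m = l + k *)
Definition GC (l k : nat) (A : 'M['F_2]_(l, k)) : 'M['F_2]_(l, l + k) :=
  row_mx 1%:M A.

Definition fvec (n l k : nat) (g : 'I_l -> bvec (n + n)) (A : 'M['F_2]_(l, k))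
  (i : 'I_(l + k)) : bvec (n + n) :=
  \sum_(j < l) GC A j i *: g j.

(* Errors e = (e_d, e_m) in F_2^{2n} x F_2^m = F_2^N, N = 2n + m *)
Definition err_d (n m : nat) (e : bvec (n + n + m)) : bvec (n + n) := lsubmx e.
Definition err_m (n m : nat) (e : bvec (n + n + m)) : bvec m := rsubmx e.

Definition syn (n l k : nat) (g : 'I_l -> bvec (n + n)) (A : 'M['F_2]_(l, k))
  (e : bvec (n + n + (l + k))) : bvec (l + k) :=
  \row_i (bdot (fvec g A i) (pbar (err_d e)) + err_m e 0 i).

Definition wtP (n m : nat) (e : bvec (n + n + m)) : nat :=
  #|[set i : 'I_n | (lsubmx (err_d e) 0 i != 0) || (rsubmx (err_d e) 0 i != 0)]|
  + #|[set j : 'I_m | err_m e 0 j != 0]|.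

Definition vec_of_set (N : nat) (S : {set 'I_N}) : bvec N :=
  \row_i (if i \in S then 1 else 0).
Definition supp (N : nat) (e : bvec N) : {set 'I_N} := [set i | e 0 i != 0].

Definition wtP_set (n m : nat) (S : {set 'I_(n + n + m)}) : nat :=
  wtP (vec_of_set S).

Definition is_pure_distance (n l k : nat) (g : 'I_l -> bvec (n + n))
  (A : 'M['F_2]_(l, k)) (d : nat) : Prop :=
  (exists e : bvec (n + n + (l + k)), e != 0 /\ syn g A e = 0 /\ wtP e = d) /\
  (forall e : bvec (n + n + (l + k)), e != 0 -> syn g A e = 0 -> (d <= wtP e)%N).

Definition is_channel_dist (R : realType) (N : nat) (gam : {set 'I_N})
  (p : {ffun bvec N -> R}) : Prop :=
  (forall e, 0 <= p e) /\ (\sum_e p e = 1) /\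
  (forall e, p e != 0 -> supp e \subset gam).

(* Total error distribution: distribution of sum_{gamma in Gamma} e_gamma with
   independent e_gamma ~ P_gamma (families indexed by gamma, zero off Gamma). *)
Definition total_dist (R : realType) (N : nat) (Gam : {set {set 'I_N}})
  (P : {set 'I_N} -> {ffun bvec N -> R}) (x : bvec N) : R :=
  \sum_(f : {ffun {set 'I_N} -> bvec N} |
          [forall gam, (gam \notin Gam) ==> (f gam == 0)] &&
          (\sum_(gam in Gam) f gam == x))
     \prod_(gam in Gam) P gam (f gam).

Definition syn_dist (R : realType) (n l k : nat) (g : 'I_l -> bvec (n + n))
  (A : 'M['F_2]_(l, k)) (Gam : {set {set 'I_(n + n + (l + k))}})
  (P : {set 'I_(n + n + (l + k))} -> {ffun bvec (n + n + (l + k)) -> R})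
  (s : bvec (l + k)) : R :=
  \sum_(e | syn g A e == s) total_dist Gam P e.

Definition Gamma_t (n m t : nat) : {set {set 'I_(n + n + m)}} :=
  [set gam | (wtP_set gam <= t)%N].

(* Main.v *)
Require Import Defs.
From HB Require Import structures.
From mathcomp Require Import all_boot all_order all_algebra.
From mathcomp Require Import reals.
From mathcomp Require Import sequences exp lra zify.
From Stdlib Require Import Lia.
Import Order.TTheory GRing.Theory Num.Theory.
Local Open Scope ring_scope.
Set Implicit Arguments. Unset Strict Implicit. Unset Printing Implicit Defensive.

Lemma F2_cases (a : 'F_2) : a = 0 \/ a = 1.
Proof. by case: a => [[|[|//]]] ? /=; [left|right]; apply/val_inj. Qed.

Lemma F2_addxx (a : 'F_2) : a + a = 0.
Proof. by case: (F2_cases a) => ->; [rewrite addr0 | apply/val_inj]. Qed.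

Lemma bvec_addxx K (v : bvec K) : v + v = 0.
Proof. by apply/rowP => j; rewrite !mxE F2_addxx. Qed.

Section Chi.
Variable R : realType.
Definition chi (b : 'F_2) : R := if b == 0 then 1 else -1.

Lemma chiD a b : chi (a + b) = chi a * chi b.
Proof. by case: (F2_cases a) => ->; case: (F2_cases b) => -> //=; rewrite /chi /= ?mulr1 ?mul1r ?mulrNN ?mulr1. Qed.

Lemma chi_sum_big (I : Type) (s : seq I) (P : pred I) (F : I -> 'F_2) :
  chi (\sum_(i <- s | P i) F i) = \prod_(i <- s | P i) chi (F i).
Proof. by apply: (big_morph chi chiD). Qed.

Lemma bdotE K (u v : bvec K) : bdot u v = \sum_j u 0 j * v 0 j.
Proof. by rewrite /bdot !mxE; apply: eq_bigr => j _; rewrite mxE. Qed.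

Lemma bdotC K (u v : bvec K) : bdot u v = bdot v u.
Proof. by rewrite !bdotE; apply: eq_bigr => j _; rewrite mulrC. Qed.

Lemma bdotDr K (u v w : bvec K) : bdot u (v + w) = bdot u v + bdot u w.
Proof. by rewrite !bdotE -big_split; apply: eq_bigr => j _; rewrite mxE mulrDr. Qed.

Lemma bdotDl K (u v w : bvec K) : bdot (v + w) u = bdot v u + bdot w u.
Proof. by rewrite !(bdotC _ u) bdotDr. Qed.

Lemma bdot_sumr K (I : Type) (s : seq I) (P : pred I) (F : I -> bvec K) u :
  bdot u (\sum_(i <- s | P i) F i) = \sum_(i <- s | P i) bdot u (F i).
Proof.
apply: (big_morph (bdot u) (bdotDr u)).
by rewrite bdotE big1 // => j _; rewrite mxE mulr0.
Qed.

Lemma bdot_delta K (w : bvec K) j : bdot w (delta_mx 0 j) = w 0 j.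
Proof.
rewrite bdotE (bigD1 j) //= big1 => [|i /negbTE ij]; rewrite mxE.
  by rewrite !eqxx mulr1 addr0.
by rewrite ij andbF mulr0.
Qed.

Lemma chi_sum K (v : bvec K) :
  \sum_(u : bvec K) chi (bdot u v) = if v == 0 then (2 ^ K)%:R else 0.
Proof.
case: eqP => [->|/eqP].
  rewrite (eq_bigr (fun _ => 1)) => [|u _]; last first.
    by rewrite bdotE big1 /chi ?eqxx // => j _; rewrite mxE mulr0.
  by rewrite sumr_const card_mx mul1n card_Fp.
move=> nz.
have [j vj] : exists j, v 0 j != 0.
  apply/existsP; apply: contraR nz => /existsPn H; apply/eqP/rowP => j.
  by rewrite mxE; apply/eqP; move: (H j); rewrite negbK.
have vj1 : v 0 j = 1 by case: (F2_cases (v 0 j)) vj => ->.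
set S := \sum_u _.
have : S = - S.
  rewrite {1}/S (reindex_inj (addrI (delta_mx 0 j))) /S -sumrN.
  apply: eq_bigr => u _; rewrite bdotDl bdotC bdot_delta vj1 chiD.
  by rewrite /chi /= mulN1r.
by move/eqP; rewrite -addr_eq0 -mulr2n mulrn_eq0 /= => /eqP.
Qed.

Lemma eq_opp0 (S : R) : S = - S -> S = 0.
Proof. by move/eqP; rewrite -addr_eq0 -mulr2n mulrn_eq0 /= => /eqP. Qed.

Lemma bvec_addeq0 K (u x : bvec K) : (u + x == 0) = (u == x).
Proof.
apply/eqP/eqP => [H|->]; last exact: bvec_addxx.
by rewrite -[u]addr0 -(bvec_addxx x) addrA H add0r.
Qed.

Definition coef K (h : bvec K -> R) (w : bvec K) : R :=
  \sum_(u : bvec K) h u * chi (bdot w u).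

Lemma coef_inv K (h : bvec K -> R) x :
  \sum_(w : bvec K) coef h w * chi (bdot w x) = (2 ^ K)%:R * h x.
Proof.
rewrite /coef.
under eq_bigr do rewrite mulr_suml.
rewrite exchange_big /=.
under eq_bigr => u _.
  under eq_bigr do rewrite -mulrA -chiD -bdotDr.
  rewrite -mulr_sumr.
  rewrite chi_sum bvec_addeq0.
  over.
rewrite (bigD1 x) // eqxx big1 => [|u /negbTE ->]; last by rewrite mulr0.
by rewrite [RHS]mulrC; exact: addr0.
Qed.

Lemma coef_local K (gam : {set 'I_K}) (h : bvec K -> R) (w : bvec K) (j : 'I_K) :
  (forall u u' : bvec K, (forall i, i \in gam -> u 0 i = u' 0 i) -> h u = h u') ->
  w 0 j != 0 -> j \notin gam -> coef h w = 0.
Proof.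
move=> hloc wj jg.
have wj1 : w 0 j = 1 by case: (F2_cases (w 0 j)) wj => ->.
apply: eq_opp0.
rewrite {1}/coef (reindex_inj (addrI (delta_mx 0 j))) /coef -sumrN.
apply: eq_bigr => u _; rewrite bdotDr bdot_delta wj1 chiD.
rewrite (hloc _ u); first by rewrite /chi /= mulN1r mulrN.
move=> i ig; rewrite !mxE.
have -> : (i == j) = false by apply/negbTE; apply: contraNneq jg => <-.
by rewrite andbF add0r.
Qed.
End Chi.

Lemma wtP_mono n m (w v : bvec (n + n + m)) :
  (forall j, w 0 j != 0 -> v 0 j != 0) -> (wtP w <= wtP v)%N.
Proof.
move=> H; rewrite /wtP /err_d /err_m leq_add //; apply: subset_leq_card;
  apply/subsetP => i; rewrite !inE !mxE.
  by case/orP => /H ->; rewrite ?orbT.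
exact: H.
Qed.

Lemma wtP_add n m (w v : bvec (n + n + m)) :
  (wtP (w + v) <= wtP w + wtP v)%N.
Proof.
have key (a b : 'F_2) : a + b != 0 -> (a != 0) || (b != 0).
  by apply: contraR; case/norP => /negPn/eqP -> /negPn/eqP ->; rewrite addr0.
rewrite /wtP /err_d /err_m addnACA leq_add //;
  apply: (leq_trans _ (leq_card_setU _ _)); apply: subset_leq_card;
  apply/subsetP => i; rewrite !inE !mxE.
  by case/orP => /key /orP [] ->; rewrite ?orbT.
by move/key.
Qed.

Lemma wtP_eq0 n m (w : bvec (n + n + m)) : wtP w = 0%N -> w = 0.
Proof.
move=> H; apply/rowP => j; rewrite mxE; apply/eqP; apply: contraT => wj.
move: H; rewrite /wtP /err_d /err_m => /eqP; rewrite addn_eq0 => /andP [H1 H2].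
case: (split_ordP j) wj => [j1 -> wj|j2 -> wj].
  move/eqP/cards0_eq/setP: H1 => H1.
  case: (split_ordP j1) wj => [i -> wi|i -> wi]; move: (H1 i);
    by rewrite !inE !mxE wi ?orbT.
move/eqP/cards0_eq/setP/(_ j2): H2.
by rewrite !inE mxE wj.
Qed.

Lemma wtP_vec_of_set n m (w : bvec (n + n + m)) (gam : {set 'I_(n + n + m)}) :
  supp w \subset gam -> (wtP w <= wtP_set gam)%N.
Proof.
move=> /subsetP H; apply: wtP_mono => j wj.
by rewrite mxE (H j) ?inE.
Qed.

Lemma pbarD n (a b : bvec (n + n)) : pbar (a + b) = pbar a + pbar b.
Proof. by rewrite /pbar !linearD /= add_row_mx. Qed.

Lemma syn_add n l k (g : 'I_l -> bvec (n + n)) (A : 'M['F_2]_(l, k)) e1 e2 :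
  syn g A (e1 + e2) = syn g A e1 + syn g A e2.
Proof.
apply/rowP => i; rewrite !mxE /err_d /err_m linearD /= pbarD bdotDr.
by rewrite addrACA.
Qed.

Lemma syn0 n l k (g : 'I_l -> bvec (n + n)) (A : 'M['F_2]_(l, k)) :
  syn g A 0 = 0.
Proof.
by apply: (@addrI _ (syn g A 0)); rewrite addr0 -syn_add addr0.
Qed.

Lemma syn_mx n l k (g : 'I_l -> bvec (n + n)) (A : 'M['F_2]_(l, k)) :
  exists M : 'M['F_2]_(n + n + (l + k), l + k), forall e, syn g A e = e *m M.
Proof.
exists (\matrix_i syn g A (delta_mx 0 i)) => e.
rewrite mulmx_sum_row {1}[e]row_sum_delta.
have synS : forall (I : Type) (s : seq I) (F : I -> bvec _),
  syn g A (\sum_(i <- s) F i) = \sum_(i <- s) syn g A (F i).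
  by move=> I s F; apply: (big_morph _ (@syn_add _ _ _ g A) (syn0 g A)).
rewrite synS; apply: eq_bigr => i _; rewrite rowK.
by case: (F2_cases (e 0 i)) => ->; rewrite ?scale0r ?syn0 ?scale1r.
Qed.

Lemma syn_char n l k (g : 'I_l -> bvec (n + n)) (A : 'M['F_2]_(l, k)) :
  exists us : bvec (l + k) -> bvec (n + n + (l + k)),
    forall s e, bdot (us s) e = bdot s (syn g A e).
Proof.
have [M HM] := syn_mx g A.
exists (fun s => s *m M^T) => s e.
by rewrite HM /bdot trmx_mul mulmxA.
Qed.


Definition phat (R : realType) N (p : {ffun bvec N -> R}) (u : bvec N) : R :=
  \sum_e p e * chi R (bdot u e).

Lemma hatT (R : realType) N (Gam : {set {set 'I_N}}) (P : {set 'I_N} -> {ffun bvec N -> R}) (u : bvec N) :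
  \sum_x total_dist Gam P x * chi R (bdot u x) =
  \prod_(gam in Gam) phat (P gam) u.
Proof.

rewrite [LHS](eq_bigr (fun x => \sum_(f : {ffun {set 'I_N} -> bvec N} | [forall gam, (gam \notin Gam) ==> (f gam == 0)] && (\sum_(gam in Gam) f gam == x)) (\prod_(gam in Gam) P gam (f gam) * chi R (bdot u x)))); last first.
  by move=> x _; rewrite /total_dist mulr_suml.
transitivity (\sum_(f : {ffun {set 'I_N} -> bvec N} |
          [forall gam, (gam \notin Gam) ==> (f gam == 0)])
     \prod_(gam in Gam) (P gam (f gam) * chi R (bdot u (f gam)))).
  rewrite [RHS](partition_big (fun f : {ffun {set 'I_N} -> bvec N} => \sum_(gam in Gam) f gam) predT) //=.
  apply: eq_bigr => x _; apply: eq_bigr => f /andP [_ /eqP <-].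
  by rewrite bdot_sumr chi_sum_big big_split.
pose Q := fun gam : {set 'I_N} => if gam \in Gam then predT else pred1 (0 : bvec N).
pose F := fun gam (e : bvec N) => if gam \in Gam then P gam e * chi R (bdot u e) else 1.
have := bigA_distr_big_dep Q F.
rewrite /phat; move=> H.
transitivity (\prod_gam \sum_(e | Q gam e) F gam e); last first.
  rewrite [RHS]big_mkcond; apply: eq_bigr => gam _; rewrite /Q /F.
  by case: ifP => _ //; rewrite big_pred1_eq.
rewrite H; apply: eq_big => [f|f _].
  apply/forallP/familyP => [H1 gam|H1 gam].
    by move: (H1 gam); rewrite /Q; case: ifP => //= _ /eqP ->; rewrite inE.
  by move: (H1 gam); rewrite /Q; case: ifP => //= _; rewrite inE.
by rewrite [LHS]big_mkcond; apply: eq_bigr => gam _; rewrite /F.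
Qed.

Lemma phat_pos (R : realType) N (gam : {set 'I_N}) (p : {ffun bvec N -> R}) u :
  is_channel_dist gam p -> 1 / 2 < p 0 -> 0 < phat p u.
Proof.
move=> [p0 [p1 _]] ph.
have b0 : bdot u 0 = 0 by rewrite bdotE big1 // => j _; rewrite mxE mulr0.
rewrite /phat (bigD1 0) //= b0 /chi eqxx mulr1.
have : \sum_(e | e != 0) p e = 1 - p 0.
  by apply/eqP; rewrite eq_sym subr_eq -p1 [X in X == _](bigD1 0) //= addrC.
move=> H.
have : - (1 - p 0) <= \sum_(e | e != 0) p e * chi R (bdot u e).
  rewrite -H -sumrN; apply: ler_sum => e _; rewrite /chi.
  case: ifP => _; rewrite ?mulr1 ?mulrN1. 2: by []. have := p0 e; lra.
rewrite /chi; lra.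
Qed.

Lemma phat_local (R : realType) N (gam : {set 'I_N}) (p : {ffun bvec N -> R}) (u u' : bvec N) :
  is_channel_dist gam p -> (forall i, i \in gam -> u 0 i = u' 0 i) ->
  phat p u = phat p u'.
Proof.
move=> [_ [_ hs]] H; apply: eq_bigr => e _.
have [->|/hs /subsetP S] := eqVneq (p e) 0; first by rewrite !mul0r.
congr (_ * chi R _); rewrite !bdotE; apply: eq_bigr => j _.
have [->|ej] := eqVneq (e 0 j) 0; first by rewrite !mulr0.
by rewrite H // S // inE.
Qed.

Unset Implicit Arguments. Set Strict Implicit. Set Printing Implicit Defensive.

Theorem corollary11 (R : realType) (n l k : nat)
  (g : 'I_l -> bvec (n + n)) (A : 'M['F_2]_(l, k))
  (hcomm : forall i j : 'I_l, bdot (pbar (g i)) (g j) = 0)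
  (dp t : nat) (hdp : is_pure_distance g A dp)
  (ht : (t <= (dp - 1)./2)%N)
  (P P' : {set 'I_(n + n + (l + k))} -> {ffun bvec (n + n + (l + k)) -> R})
  (hP : forall gam, gam \in Gamma_t n (l + k) t ->
          is_channel_dist gam (P gam) /\ 1 / 2 < P gam 0)
  (hP' : forall gam, gam \in Gamma_t n (l + k) t ->
          is_channel_dist gam (P' gam) /\ 1 / 2 < P' gam 0)
  (hsyn : forall s, syn_dist g A (Gamma_t n (l + k) t) P s =
                    syn_dist g A (Gamma_t n (l + k) t) P' s) :
  forall x, total_dist (Gamma_t n (l + k) t) P x = total_dist (Gamma_t n (l + k) t) P' x.
Proof.
move=> x.
set Gam := Gamma_t n (l + k) t.
have [us Hus] := syn_char g A.
have [[e0 [e0nz [_ e0w]]] hmin] := hdp.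
have dp_pos : (0 < dp)%N.
  rewrite -e0w lt0n; apply/negP => /eqP /wtP_eq0 e00.
  by rewrite e00 eqxx in e0nz.
have h2t : (t + t < dp)%N.
  have := odd_double_half (dp - 1); rewrite -addnn.
  move: ht; set h := (dp - 1)./2; set o := odd _; case: o => /=; lia.
have wsmall : forall w w' : bvec (n + n + (l + k)), (wtP w <= t)%N -> (wtP w' <= t)%N ->
    syn g A (w + w') = 0 -> w = w'.
  move=> w w' hw hw' hs.
  case: (eqVneq (w + w') 0) => [H0|nz]; first by apply/eqP; rewrite -bvec_addeq0 H0.
  have := hmin _ nz hs; have := wtP_add w w'; lia.
have posP : forall gam, gam \in Gam -> forall u, 0 < phat (P gam) u.
  by move=> gam hg u; have [h1 h2] := hP gam hg; exact: phat_pos h1 h2.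
have posP' : forall gam, gam \in Gam -> forall u, 0 < phat (P' gam) u.
  by move=> gam hg u; have [h1 h2] := hP' gam hg; exact: phat_pos h1 h2.
pose L (Q : {set 'I_(n + n + (l + k))} -> {ffun bvec (n + n + (l + k)) -> R}) u :=
  \sum_(gam in Gam) ln (phat (Q gam) u).
have hatE : forall u, \sum_x total_dist Gam P x * chi R (bdot u x) = expR (L P u).
  move=> u; rewrite hatT /L expR_sum; apply: eq_bigr => gam hg.
  by rewrite lnK // posrE posP.
have hatE' : forall u, \sum_x total_dist Gam P' x * chi R (bdot u x) = expR (L P' u).
  move=> u; rewrite hatT /L expR_sum; apply: eq_bigr => gam hg.
  by rewrite lnK // posrE posP'.
pose D u := L P u - L P' u.
have synE : forall Q s, \sum_x total_dist Gam Q x * chi R (bdot (us s) x) =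
    \sum_sg syn_dist g A Gam Q sg * chi R (bdot s sg).
  move=> Q s.
  rewrite [LHS](eq_bigr (fun x => total_dist Gam Q x * chi R (bdot s (syn g A x)))); last first.
    by move=> y _; rewrite Hus.
  rewrite (partition_big (syn g A) predT) //=; apply: eq_bigr => sg _.
  rewrite /syn_dist mulr_suml; apply: eq_big => [y //|y /eqP ->] //.
have Dus : forall s, D (us s) = 0.
  move=> s; rewrite /D; apply/eqP; rewrite subr_eq0; apply/eqP; apply: expR_inj.
  rewrite -hatE -hatE' !synE; apply: eq_bigr => sg _; by rewrite hsyn.
have cbig : forall w, (t < wtP w)%N -> coef D w = 0.
  move=> w hw.
  transitivity (\sum_(gam in Gam) coef (fun u => ln (phat (P gam) u) - ln (phat (P' gam) u)) w).
    rewrite /coef [RHS]exchange_big /=; apply: eq_bigr => u _.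
    by rewrite /D /L -sumrB mulr_suml.
  apply: big1 => gam hg.
  have : ~~ (supp w \subset gam).
    apply/negP => /wtP_vec_of_set hs; move: hg; rewrite inE => hg.
    have := leq_trans hs hg; lia.
  case/subsetPn => j; rewrite inE => wj jg.
  apply: (coef_local (gam := gam) _ wj jg) => u u' H.
  by rewrite (phat_local (hP gam hg).1 H) (phat_local (hP' gam hg).1 H).
have csmall : forall w0, (wtP w0 <= t)%N -> coef D w0 = 0.
  move=> w0 hw0.
  have E : \sum_s \sum_w coef D w * chi R (bdot w (us s)) * chi R (bdot w0 (us s)) = 0.
    by apply: big1 => s _; rewrite -mulr_suml coef_inv Dus mulr0 mul0r.
  rewrite exchange_big /= in E.
  have E2 : forall w, \sum_s coef D w * chi R (bdot w (us s)) * chi R (bdot w0 (us s)) =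
      coef D w * (if syn g A (w + w0) == 0 then (2 ^ (l + k))%:R else 0).
    move=> w; rewrite -chi_sum mulr_sumr; apply: eq_bigr => s _.
    by rewrite -mulrA -chiD -bdotDl bdotC Hus.
  rewrite (eq_bigr _ (fun w _ => E2 w)) in E.
  rewrite (bigD1 w0) //= big1 in E; last first.
    move=> w ww0; case: (leqP (wtP w) t) => hw; last by rewrite cbig // mul0r.
    case: eqP => [/(wsmall _ _ hw hw0) eww0|_]; last by rewrite mulr0.
    by rewrite eww0 eqxx in ww0.
  move: E; rewrite bvec_addxx syn0 eqxx addr0 => /eqP; rewrite mulf_eq0 pnatr_eq0 expn_eq0 /=.
  by rewrite orbF => /eqP.
have D0 : forall u, D u = 0.
  move=> u; have := coef_inv D u; rewrite big1 => [|w _]; last first.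
    by case: (leqP (wtP w) t) => hw; [rewrite csmall // mul0r | rewrite cbig // mul0r].
  by move/esym/eqP; rewrite mulf_eq0 pnatr_eq0 expn_eq0 /= => /eqP.
have hatEq : forall u, \sum_x total_dist Gam P x * chi R (bdot u x) =
    \sum_x total_dist Gam P' x * chi R (bdot u x).
  move=> u; rewrite hatE hatE'; congr expR; apply/eqP; rewrite -subr_eq0; apply/eqP.
  exact: D0.
have inv1 := coef_inv (total_dist Gam P) x.
have inv2 := coef_inv (total_dist Gam P') x.
apply: (@mulfI _ (2 ^ (n + n + (l + k)))%:R); first by rewrite pnatr_eq0 expn_eq0.
by rewrite -inv1 -inv2; apply: eq_bigr => w _; rewrite /coef hatEq.
Qed.
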